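(* Let $A$ be a coherent reduced commutative ring, $E$ a non-zero $A$-module and $R=A\propto E$ the trivial ring extension of $A$ by $E$. The following are equivalent: (1) $R$ is Hermite; (2) $R$ is B\'ezout; (3) $A$ is B\'ezout, $E$ is FP-injective and all finitely generated submodules of $E$ are cyclic.
   Context: All rings are commutative with identity. A ring is coherent if all its finitely generated ideals are finitely presented. The trivial ring extension $R=A\propto E$ is the ring with underlying group $A\times E$ and multiplication $(a,e)(a',e')=(aa',ae'+a'e)$. A ring is B\'ezout if every finitely generated ideal is principal; $R$ is Hermite if for all $a,b\in R$ there exist $d,a',b'$ with $a=da'$, $b=db'$, $Ra'+Rb'=R$. A module $E$ is FP-injective if $\mathrm{Ext}^1(F,E)=0$ for all finitely presented $F$. *)

(* Defs.v *)
From HB Require Import structures.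
From mathcomp Require Import all_boot all_order all_algebra.
Set Implicit Arguments. Unset Strict Implicit. Unset Printing Implicit Defensive.
Import GRing.Theory.
Local Open Scope ring_scope.

Definition reduced (A : comNzRingType) : Prop :=
  forall (x : A) (n : nat), x ^+ n = 0 -> x = 0.

Definition generates (A : comNzRingType) (M : lmodType A) (n : nat)
  (g : 'I_n -> M) : Prop :=
  forall v : M, exists c : 'I_n -> A, v = \sum_(i < n) c i *: g i.

(* The module of relations (syzygies) of a family g : 'I_n -> M,
   i.e. the kernel of A^n -> M, (c_i) |-> sum c_i g_i, is finitely
   generated (as a submodule of A^n, vectors of A^n being functions
   'I_n -> A). *)
Definition relations_fg (A : comNzRingType) (M : lmodType A) (n : nat)
  (g : 'I_n -> M) : Prop :=
  exists (m : nat) (r : 'I_m -> 'I_n -> A),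
    (forall j, \sum_(i < n) r j i *: g i = 0) /\
    (forall c : 'I_n -> A, \sum_(i < n) c i *: g i = 0 ->
       exists u : 'I_m -> A, forall i, c i = \sum_(j < m) u j * r j i).

Definition finitely_presented (A : comNzRingType) (M : lmodType A) : Prop :=
  exists (n : nat) (g : 'I_n -> M), generates g /\ relations_fg g.

Definition in_ideal (A : comNzRingType) (n : nat) (a : 'I_n -> A) (x : A) : Prop :=
  exists c : 'I_n -> A, x = \sum_(i < n) c i * a i.

Definition coherent (A : comNzRingType) : Prop :=
  forall (n : nat) (a : 'I_n -> A),
    exists (m : nat) (b : 'I_m -> A),
      (forall x, in_ideal a x <-> in_ideal b x) /\
      relations_fg (b : 'I_m -> A^o).

Definition bezout (R : comNzRingType) : Prop :=
  forall (n : nat) (a : 'I_n -> R), exists d : R,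
    (forall x, in_ideal a x <-> exists c, x = c * d).

Definition hermite (R : comNzRingType) : Prop :=
  forall a b : R, exists d a' b' : R,
    [/\ a = d * a', b = d * b' & exists u v : R, u * a' + v * b' = 1].

Definition fg_submodules_cyclic (A : comNzRingType) (E : lmodType A) : Prop :=
  forall (n : nat) (e : 'I_n -> E), exists g : E,
    forall x : E, (exists c : 'I_n -> A, x = \sum_(i < n) c i *: e i)
                  <-> exists c : A, x = c *: g.

(* Ext^1_A(F, E) = 0, in Yoneda form: every short exact sequence
   0 -> E -> M -> F -> 0 of A-modules splits. *)
Definition Ext1_vanishes (A : comNzRingType) (F E : lmodType A) : Prop :=
  forall (M : lmodType A) (i : {linear E -> M}) (p : {linear M -> F}),
    injective i -> (forall y : F, exists x : M, p x = y) ->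
    (forall x : M, p x = 0 <-> exists e : E, i e = x) ->
    exists r : {linear M -> E}, forall e : E, r (i e) = e.

Definition FP_injective (A : comNzRingType) (E : lmodType A) : Prop :=
  forall F : lmodType A, finitely_presented F -> Ext1_vanishes F E.

Section TrivExt.
Variables (A : comNzRingType) (E : lmodType A).

Definition triv_ext : Type := (A * E)%type.
HB.instance Definition _ := GRing.Zmodule.on triv_ext.

Definition te_one : triv_ext := (1, 0).
Definition te_mul (x y : triv_ext) : triv_ext :=
  (x.1 * y.1, x.1 *: y.2 + y.1 *: x.2).

Lemma te_mulA : associative te_mul.
Proof.
move=> [a e] [b f] [c g]; rewrite /te_mul /=; congr (_, _); first by rewrite mulrA.
rewrite !scalerDr !scalerA !addrA; congr (_ + _ + _); first by rewrite mulrC.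
by rewrite mulrC.
Qed.

Lemma te_mulC : commutative te_mul.
Proof. by move=> [a e] [b f]; rewrite /te_mul /= mulrC addrC. Qed.

Lemma te_mul1 : left_id te_one te_mul.
Proof. by move=> [a e]; rewrite /te_mul /= mul1r scale1r scaler0 addr0. Qed.

Lemma te_mulDl : left_distributive te_mul +%R.
Proof.
move=> [a e] [b f] [c g]; rewrite /te_mul /=; congr (_, _); first by rewrite mulrDl.
rewrite scalerDl scalerDr; rewrite -!addrA; congr (_ + _).
by rewrite addrC -!addrA; congr (_ + _); rewrite addrC.
Qed.

Lemma te_one_neq0 : te_one != 0.
Proof. by apply/negP => /eqP [] /eqP; rewrite oner_eq0. Qed.

HB.instance Definition _ := GRing.Zmodule_isComNzRing.Build triv_ext
  te_mulA te_mulC te_mul1 te_mulDl te_one_neq0.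
End TrivExt.

(* Main.v *)
Require Import Defs.
From HB Require Import structures.
From mathcomp Require Import all_boot all_order all_algebra ring.
From Stdlib Require Import ClassicalEpsilon.
Set Implicit Arguments. Unset Strict Implicit. Unset Printing Implicit Defensive.
Import GRing.Theory.
Local Open Scope ring_scope.

Definition cid {T : Type} {P : T -> Prop} (h : exists x, P x) : {x | P x} :=
  constructive_indefinite_description P h.

Lemma sum_delta (A : comNzRingType) n (c : 'I_n -> A) i :
  \sum_(l < n) c l * (l == i)%:R = c i.
Proof.
rewrite (bigD1 i) //= eqxx mulr1 big1 ?addr0 // => l /negPf ->; by rewrite mulr0.
Qed.

Lemma sum_delta' (A : comNzRingType) n (c : 'I_n -> A) i :
  \sum_(l < n) c l * (i == l)%:R = c i.
Proof. by rewrite -(sum_delta c i); apply: eq_bigr => l _; rewrite eq_sym. Qed.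

Lemma split_l m n (i : 'I_m) : split (lshift n i) = inl i.
Proof. exact: (unsplitK (inl i)). Qed.
Lemma split_r m n (i : 'I_n) : split (rshift m i) = inr i.
Proof. exact: (unsplitK (inr i)). Qed.

Definition relfg (A : comNzRingType) n (a : 'I_n -> A) :=
  exists m (r : 'I_m -> 'I_n -> A),
    (forall j, \sum_(i < n) r j i * a i = 0) /\
    (forall c : 'I_n -> A, \sum_(i < n) c i * a i = 0 ->
       exists u : 'I_m -> A, forall i, c i = \sum_(j < m) u j * r j i).

Lemma rel_fg_any (A : comNzRingType) : coherent A ->
  forall n (a : 'I_n -> A), relfg a.
Proof.
move=> hc n a; have [m [b [hab [m' [rb [hrb1 hrb2]]]]]] := hc n a.
have hb k : in_ideal a (b k) by apply/hab; exists (fun k' => (k' == k)%:R);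
  rewrite (eq_bigr _ (fun _ _ => mulrC _ _)) sum_delta.
have ha l : in_ideal b (a l) by apply/hab; exists (fun k' => (k' == l)%:R);
  rewrite (eq_bigr _ (fun _ _ => mulrC _ _)) sum_delta.
pose s k := projT1 (cid (hb k)). have hs k : b k = \sum_i s k i * a i := projT2 (cid (hb k)).
pose t l := projT1 (cid (ha l)). have ht l : a l = \sum_k t l k * b k := projT2 (cid (ha l)).
pose rho (j : 'I_m') (i : 'I_n) := \sum_(k < m) rb j k * s k i.
pose w (l : 'I_n) (i : 'I_n) := (l == i)%:R - \sum_(k < m) t l k * s k i.
exists (m' + n)%N, (fun j => match split j with inl j' => rho j' | inr l => w l end).
split.
- move=> j; case: (split j) => [j'|l].
  + rewrite -[RHS](hrb1 j'); under eq_bigr => i _ do rewrite /rho mulr_suml.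
    rewrite exchange_big /=; apply: eq_bigr => k _.
    by rewrite hs scaler_sumr; apply: eq_bigr => i _; rewrite -mulrA.
  + rewrite /w; under eq_bigr => i _ do rewrite mulrBl.
    rewrite sumrB (eq_bigr _ (fun i _ => mulrC _ _)) sum_delta' ht.
    apply/eqP; rewrite subr_eq0; apply/eqP.
    under [RHS]eq_bigr => i _ do rewrite mulr_suml.
    rewrite exchange_big /=; apply: eq_bigr => k _.
    by rewrite hs mulr_sumr; apply: eq_bigr => i _; rewrite mulrA.
- move=> c hc0.
  pose x k := \sum_(l < n) c l * t l k.
  have hx : \sum_(k < m) x k *: (b k : A^o) = 0.
    rewrite -[RHS]hc0 /x; under eq_bigr => k _ do rewrite scaler_suml.
    rewrite exchange_big /=; apply: eq_bigr => l _.
    by rewrite ht mulr_sumr; apply: eq_bigr => k _; rewrite -scalerA.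
  have [u hu] := hrb2 x hx.
  exists (fun j => match split j with inl j' => u j' | inr l => c l end) => i.
  rewrite big_split_ord /=.
  under eq_bigr => j _ do rewrite split_l.
  under [X in _ = _ + X]eq_bigr => j _ do rewrite split_r.
  rewrite /rho /w.
  under [X in _ = _ + X]eq_bigr => l _ do rewrite mulrBr.
  rewrite sumrB sum_delta.
  set S1 := \sum_(j < m') _. set S2 := \sum_(l < n) _.
  suff -> : S1 = S2 by ring.
  rewrite /S1 /S2.
  under eq_bigr => j _ do rewrite mulr_sumr.
  rewrite exchange_big /=.
  under [RHS]eq_bigr => l _ do rewrite mulr_sumr.
  rewrite [RHS]exchange_big /=; apply: eq_bigr => k _.
  have -> : \sum_(i0 < m') u i0 * (rb i0 k * s k i) = x k * s k i.
    by rewrite hu mulr_suml; apply: eq_bigr => j _; rewrite mulrA.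
  by rewrite /x mulr_suml; apply: eq_bigr => l _; rewrite mulrA.
Qed.

Definition o1 : 'I_2 := @Ordinal 2 1 isT.
Lemma sum2 (V : nmodType) (F : 'I_2 -> V) : \sum_(i < 2) F i = F ord0 + F o1.
Proof. rewrite big_ord_recl big_ord1; congr (_ + F _); exact: val_inj. Qed.

Definition fam2 (T : Type) (a b : T) : 'I_2 -> T := fun i => if i == ord0 then a else b.

Lemma bez2 (A : comNzRingType) : bezout A -> forall a b : A,
  exists d u v a0 b0, [/\ d = u * a + v * b, a = a0 * d & b = b0 * d].
Proof.
move=> hb a b; have [d hd] := hb 2%N (fam2 a b).
have [[u v] huv] : exists uv : A * A, d = uv.1 * a + uv.2 * b.
  have [c hc] : in_ideal (fam2 a b) d by apply/hd; exists 1; rewrite mul1r.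
  by exists (c ord0, c o1); rewrite hc sum2.
have [a0 ha] : exists c, a = c * d by apply/hd; exists (fam2 1 0);
  rewrite sum2 /fam2 /= mul1r mul0r addr0.
have [b0 hb0] : exists c, b = c * d by apply/hd; exists (fam2 0 1);
  rewrite sum2 /fam2 /= mul1r mul0r add0r.
by exists d, u, v, a0, b0.
Qed.

Lemma ann_principal (A : comNzRingType) : coherent A -> bezout A ->
  forall c : A, exists k, k * c = 0 /\ forall z, z * c = 0 -> exists y, z = y * k.
Proof.
move=> hco hb c; have [m [r [hr1 hr2]]] := rel_fg_any hco (fun _ : 'I_1 => c).
have [k hk] := hb m (fun j => r j ord0).
have r0 j : r j ord0 * c = 0 by rewrite -(hr1 j) big_ord1.
exists k; split.
  have [u ->] : in_ideal (fun j => r j ord0) k by apply/hk; exists 1; rewrite mul1r.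
  by rewrite mulr_suml big1 // => j _; rewrite -mulrA r0 mulr0.
move=> z hz; apply/hk.
have [|u hu] := hr2 (fun _ => z); first by rewrite big_ord1.
by exists u; rewrite (hu ord0).
Qed.

Lemma idem_ann (A : comNzRingType) : coherent A -> bezout A -> reduced A ->
  forall c : A, exists e, [/\ e * e = e, c * (1 - e) = 0 &
     forall z, z * c = 0 -> e * z = 0].
Proof.
move=> hco hb hred c; have [k [hk1 hk2]] := ann_principal hco hb c.
have [d [u [v [c' [k' [hd hc hk]]]]]] := bez2 hb c k.
have dreg x : x * d = 0 -> x = 0.
  move=> hx; have hxc : x * c = 0 by rewrite hc mulrCA hx mulr0.
  have [y hy] := hk2 x hxc.
  have hxk : x * k = 0 by rewrite hk mulrCA hx mulr0.
  apply: (hred x 2%N); rewrite expr2 {2}hy mulrCA hxk mulr0 //.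
have h1 : u * c' + v * k' = 1.
  apply/eqP; rewrite -subr_eq0; apply/eqP/dreg.
  by rewrite mulrBl mul1r mulrDl -!mulrA -hc -hk -hd subrr.
have h2 : c' * k' = 0.
  apply dreg; apply dreg.
  have : c * k = 0 by rewrite mulrC.
  by rewrite hc hk => H; rewrite -H; ring.
exists (u * c'); split.
- have : u * c' * (u * c' + v * k') = u * c' by rewrite h1 mulr1.
  by move=> H; rewrite -[RHS]H; ring: h2.
- have -> : 1 - u * c' = v * k' by rewrite -h1; ring.
  by rewrite hc; ring: h2.
- move=> z hz; have [y ->] := hk2 z hz; rewrite hk; ring: h2.
Qed.

Lemma lc1 (R : comNzRingType) (x y k l r : R) :
  x - y = k * (l - r) -> l = r -> x = y.
Proof. by move=> h hl; apply/eqP; rewrite -subr_eq0 h hl subrr mulr0. Qed.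
Lemma lc2 (R : comNzRingType) (x y k1 l1 r1 k2 l2 r2 : R) :
  x - y = k1 * (l1 - r1) + k2 * (l2 - r2) -> l1 = r1 -> l2 = r2 -> x = y.
Proof. by move=> h h1 h2; apply/eqP; rewrite -subr_eq0 h h1 h2 !subrr !mulr0 addr0. Qed.

Lemma herm_A (A : comNzRingType) : coherent A -> bezout A -> reduced A ->
  forall a b : A, exists d a' b' u v,
    [/\ a = d * a', b = d * b' & u * a' + v * b' = 1].
Proof.
move=> hco hb hred a b.
have [d [u [v [a0 [b0 [hd ha hb0]]]]]] := bez2 hb a b.
have [e [he1 he2 he3]] := idem_ann hco hb hred d.
have hz : e * (1 - u * a0 - v * b0) = 0.
  apply: he3; rewrite ha hb0 in hd; apply: (lc1 (k := 1 : A) _ hd); ring.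
exists d, (e * a0 + (1 - e)), (e * b0), (e * u + (1 - e)), (e * v); split.
- rewrite ha; apply: (lc1 (k := a0 - 1) _ he2); ring.
- rewrite hb0; apply: (lc1 (k := b0) _ he2); ring.
- apply: (lc2 (k1 := u * a0 - u - a0 + 1 + v * b0) (k2 := -1 : A) _ he1 hz); ring.
Qed.

Lemma sr2 (A : comNzRingType) : coherent A -> bezout A -> reduced A ->
  forall s t w al be : A, al * s + be * t + w = 1 ->
  exists x y U V : A, U * (s + x * w) + V * (t + y * w) = 1.
Proof.
move=> hco hb hred s t w al be h.
have [d [s0 [t0 [la [mu [hs ht hl]]]]]] := herm_A hco hb hred s t.
exists (- mu), la, ((al * s0 + be * t0) * la - t0), ((al * s0 + be * t0) * mu + s0).
rewrite hs ht in h *.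
apply: (lc2 (k1 := (al * s0 + be * t0) * d + w) (k2 := 1 : A) _ hl h); ring.
Qed.

Lemma herm_bez (R : comNzRingType) : hermite R -> bezout R.
Proof.
move=> hh; elim=> [|n IH] a.
  exists 0 => x; split.
    by case=> c ->; exists 0; rewrite big_ord0 mul0r.
  by case=> c ->; exists (fun _ => 0); rewrite big_ord0 mulr0.
have [d0 hd0] := IH (fun i => a (lift ord0 i)).
have [d [d0' [a' [hd0' ha' [u [v huv]]]]]] := hh d0 (a ord0).
have hd : d = u * d0 + v * a ord0.
  by rewrite hd0' ha' -[LHS]mulr1 -huv; ring.
exists d => x; split.
- case=> c ->; rewrite big_ord_recl.
  have [c' hc'] : exists c', \sum_(i < n) c (lift ord0 i) * a (lift ord0 i) = c' * d0.
    by apply/hd0; exists (fun i => c (lift ord0 i)).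
  exists (c ord0 * a' + c' * d0'); rewrite hc' hd0' ha'; ring.
- case=> c ->.
  have [c0 hc0] : in_ideal (fun i => a (lift ord0 i)) d0 by apply/hd0; exists 1; rewrite mul1r.
  exists (fun i => match unlift ord0 i with Some j => c * u * c0 j | None => c * v end).
  rewrite big_ord_recl unlift_none.
  under eq_bigr => i _ do rewrite liftK.
  rewrite hd hc0 mulrDr !mulr_sumr addrC; congr (_ + _).
    ring.
  by apply: eq_bigr => i _; ring.
Qed.

Section TE.
Variables (A : comNzRingType) (E : lmodType A).
Local Notation R := (triv_ext E).

Lemma teM (x y : R) : x * y = (x.1 * y.1, x.1 *: y.2 + y.1 *: x.2) :> R.
Proof. by []. Qed.
Lemma teD (x y : R) : x + y = (x.1 + y.1, x.2 + y.2) :> R.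
Proof. by []. Qed.
Lemma te1 : (1 : R) = (1, 0). Proof. by []. Qed.
Lemma te0 : (0 : R) = (0, 0). Proof. by []. Qed.
Lemma te_sum I (r : seq I) (P : pred I) (F : I -> R) :
  \sum_(i <- r | P i) F i = (\sum_(i <- r | P i) (F i).1, \sum_(i <- r | P i) (F i).2) :> R.
Proof.
by elim/big_rec3: _ => //= i x y1 y2 _ ->.
Qed.
Lemma te_pair_eq (a b : A) (e f : E) : ((a, e) : R) = (b, f) -> a = b /\ e = f.
Proof. by case. Qed.

Lemma bezR_bezA : bezout R -> bezout A.
Proof.
move=> hb n a; have [d hd] := hb n (fun i => (a i, 0) : R).
exists d.1 => x; split.
- case=> c ->.
  have [p hp] : exists p : R, ((\sum_i c i * a i, 0) : R) = p * d.
    apply/hd; exists (fun i => (c i, 0)); rewrite te_sum; congr pair.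
    by rewrite big1 // => i _; rewrite teM /= !scaler0 addr0.
  by exists p.1; move: hp; rewrite teM => -[].
- case=> c ->.
  have [cc hcc] : in_ideal (fun i => (a i, 0) : R) d by apply/hd; exists 1; rewrite mul1r.
  exists (fun i => c * (cc i).1); rewrite hcc te_sum /= mulr_sumr.
  by apply: eq_bigr => i _; rewrite mulrA.
Qed.

Lemma bezR_cyc : bezout R -> fg_submodules_cyclic E.
Proof.
move=> hb n e; have [d hd] := hb n (fun i => (0, e i) : R).
have [cc hcc] : in_ideal (fun i => (0, e i) : R) d by apply/hd; exists 1; rewrite mul1r.
have hd1 : d.1 = 0 by rewrite hcc te_sum /= big1 // => i _; apply: mulr0.
have hd2 : d.2 = \sum_i (cc i).1 *: e i.
  by rewrite hcc te_sum /=; apply: eq_bigr => i _; rewrite scale0r addr0.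
exists d.2 => x; split.
- case=> c ->.
  have [p hp] : exists p : R, ((0, \sum_i c i *: e i) : R) = p * d.
    apply/hd; exists (fun i => (c i, 0)); rewrite te_sum; congr pair.
      by rewrite big1 // => i _; rewrite teM /= mulr0.
    by apply: eq_bigr => i _; rewrite teM /= scaler0 addr0.
  by exists p.1; move: hp; rewrite teM hd1 scale0r addr0 => -[].
- case=> c ->; exists (fun i => c * (cc i).1); rewrite hd2 scaler_sumr.
  by apply: eq_bigr => i _; rewrite scalerA.
Qed.

Definition divisible_E := forall (a : A) (e : E),
  (forall z, z * a = 0 -> z *: e = 0) -> exists e', e = a *: e'.

Lemma bezR_div : bezout R -> divisible_E.
Proof.
move=> hb a e hann; have [d hd] := hb 2%N (fam2 ((a, 0) : R) (0, e)).
have [cc hcc] : in_ideal (fam2 ((a, 0) : R) (0, e)) d by apply/hd; exists 1; rewrite mul1r.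
rewrite sum2 /fam2 /= in hcc.
have [p hp] : exists p : R, ((a, 0) : R) = p * d.
  by apply/hd; exists (fam2 1 0); rewrite sum2 /fam2 /= mul1r mul0r addr0.
have [q hq] : exists q : R, ((0, e) : R) = q * d.
  by apply/hd; exists (fam2 0 1); rewrite sum2 /fam2 /= mul1r mul0r add0r.
move: hp hq; rewrite !teM => -[hp1 _] [hq1 hq2].
have hd1 : d.1 = (cc ord0).1 * a by rewrite hcc teD !teM /= mulr0 addr0.
have hd2 : d.2 = a *: (cc ord0).2 + (cc o1).1 *: e.
  by rewrite hcc teD !teM /= scaler0 add0r scale0r addr0.
have hqa : q.1 * a = 0 by rewrite hp1 mulrCA -hq1 mulr0.
have hqe := hann _ hqa.
exists ((cc ord0).1 *: q.2).
by rewrite hq2 hd2 hd1 scalerDr !scalerA hqa scale0r add0r [q.1 * _]mulrC -[(_ * q.1) *: e]scalerA hqe scaler0 add0r mulrC.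
Qed.
End TE.

Lemma sumZ_delta (A : comNzRingType) (V : lmodType A) n (v : 'I_n -> V) i :
  \sum_(l < n) (i == l)%:R *: v l = v i.
Proof.
rewrite (bigD1 i) //= eqxx scale1r big1 ?addr0 // => l; rewrite eq_sym => /negPf ->.
by rewrite scale0r.
Qed.

Lemma sumM_delta (A : comNzRingType) n (v : 'I_n -> A) i :
  \sum_(l < n) (i == l)%:R * v l = v i.
Proof. exact: (@sumZ_delta A A^o). Qed.

Section Solve.
Variables (A : comNzRingType) (E : lmodType A).

Definition consistent m n (a : 'I_m -> 'I_n -> A) (e : 'I_m -> E) :=
  forall c : 'I_m -> A, (forall j, \sum_i c i * a i j = 0) -> \sum_i c i *: e i = 0.

Lemma solve1 : bezout A -> divisible_E E -> forall m (al : 'I_m -> A) (g : 'I_m -> E),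
  (forall c, \sum_i c i * al i = 0 -> \sum_i c i *: g i = 0) ->
  exists x, forall i, al i *: x = g i.
Proof.
move=> hb hdiv m al g hcons; have [d hd] := hb m al.
have [s hs] : in_ideal al d by apply/hd; exists 1; rewrite mul1r.
have ht i : exists t, al i = t * d.
  by apply/hd; exists (fun l => (i == l)%:R); rewrite sumM_delta.
pose t i := projT1 (cid (ht i)).
have htE i : al i = t i * d := projT2 (cid (ht i)).
pose G := \sum_l s l *: g l.
have hg i : g i = t i *: G.
  have := hcons (fun l => t i * s l - (i == l)%:R).
  under eq_bigr => l _ do rewrite mulrBl.
  rewrite sumrB sumM_delta.
  under eq_bigr => l _ do rewrite -mulrA.
  rewrite -mulr_sumr -hs -htE subrr => /(_ erefl).
  under eq_bigr => l _ do rewrite scalerBl.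
  rewrite sumrB sumZ_delta.
  under eq_bigr => l _ do rewrite -scalerA.
  by rewrite -scaler_sumr => /eqP; rewrite subr_eq0 => /eqP.
have [x hx] : exists x, G = d *: x.
  apply: hdiv => z hz.
  have := hcons (fun l => z * s l).
  under eq_bigr => l _ do rewrite -mulrA.
  rewrite -mulr_sumr -hs hz => /(_ erefl).
  under eq_bigr => l _ do rewrite -scalerA.
  by rewrite -scaler_sumr.
by exists x => i; rewrite hg hx htE scalerA.
Qed.

Lemma swapZ (V : lmodType A) p m (c : 'I_p -> A) (r : 'I_p -> 'I_m -> A) (v : 'I_m -> V) :
  \sum_i (\sum_k c k * r k i) *: v i = \sum_k c k *: \sum_i r k i *: v i.
Proof.
under eq_bigr => i _ do rewrite scaler_suml.
rewrite exchange_big /=; apply: eq_bigr => k _.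
by rewrite scaler_sumr; apply: eq_bigr => i _; rewrite scalerA.
Qed.

Lemma solve_sys : coherent A -> bezout A -> divisible_E E ->
  forall n m (a : 'I_m -> 'I_n -> A) (e : 'I_m -> E), consistent a e ->
  exists x : 'I_n -> E, forall i, \sum_j a i j *: x j = e i.
Proof.
move=> hco hb hdiv; elim=> [|n IH] m a e hcons.
  exists (fun _ => 0) => i; rewrite big_ord0.
  have := hcons (fun l => (i == l)%:R); rewrite sumZ_delta => -> //.
  by case.
pose al i := a i ord0.
have [p [r [hr1 hr2]]] := rel_fg_any hco al.
pose b k j := \sum_i r k i * a i (lift ord0 j).
pose f k := \sum_i r k i *: e i.
have [y hy] : exists y : 'I_n -> E, forall k, \sum_j b k j *: y j = f k.
  apply: IH => c hc.
  have := hcons (fun i => \sum_k c k * r k i).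
  rewrite (swapZ c r e) => -> // j'.
  have := swapZ c r (fun i => a i j' : A^o); rewrite /= => ->.
  case: (unliftP ord0 j') => [j ->|->].
    exact: (hc j).
  by rewrite big1 // => k _; change (c k * (\sum_i r k i * al i) = 0); rewrite hr1 mulr0.
pose g i := e i - \sum_j a i (lift ord0 j) *: y j.
have [x0 hx0] : exists x0, forall i, al i *: x0 = g i.
  apply: solve1 => // c hc; have [u hu] := hr2 c hc.
  under eq_bigr => i _ do rewrite hu.
  rewrite swapZ big1 // => k _.
  rewrite /g; under eq_bigr => i _ do rewrite scalerBr.
  rewrite sumrB -/(f k) -(swapZ (r k) (fun i j => a i (lift ord0 j)) y) -hy subrr.
  by rewrite scaler0.
exists (fun j' => match unlift ord0 j' with Some j => y j | None => x0 end) => i.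
rewrite big_ord_recl unlift_none.
under eq_bigr => j _ do rewrite liftK.
by rewrite -/(al i) hx0 /g subrK.
Qed.
End Solve.

Section Split.
Variables (A : comNzRingType) (E : lmodType A).

Lemma solv_fpinj :
  (forall n m (a : 'I_m -> 'I_n -> A) (e : 'I_m -> E), consistent a e ->
     exists x : 'I_n -> E, forall i, \sum_j a i j *: x j = e i) ->
  FP_injective E.
Proof.
move=> hsolve F [n [g [hgen [m [r [hr1 hr2]]]]]] M i p hinj hsurj hker.
pose xs j := proj1_sig (cid (hsurj (g j))).
have hxs j : p (xs j) = g j := proj2_sig (cid (hsurj (g j))).
have hpi e : p (i e) = 0 by apply/hker; exists e.
have he k : exists e, i e = \sum_j r k j *: xs j.
  apply/hker; rewrite linear_sum; under eq_bigr => j _ do rewrite linearZZ hxs.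
  exact: hr1.
pose es k := proj1_sig (cid (he k)).
have hes k : i (es k) = \sum_j r k j *: xs j := proj2_sig (cid (he k)).
have [y hy] : exists y : 'I_n -> E, forall k, \sum_j r k j *: y j = es k.
  apply: hsolve => c hc; apply: hinj; rewrite linear0 linear_sum.
  under eq_bigr => k _ do rewrite linearZZ hes.
  rewrite -swapZ big1 // => j _; by rewrite hc scale0r.
have key c e c' e' : i e + \sum_j c j *: xs j = i e' + \sum_j c' j *: xs j ->
    e + \sum_j c j *: y j = e' + \sum_j c' j *: y j.
  move=> heq.
  have pZ (c0 : 'I_n -> A) : \sum_j p (c0 j *: xs j) = \sum_j c0 j *: g j.
    by apply: eq_bigr => j _; rewrite linearZZ hxs.
  have hp : \sum_j (c j - c' j) *: g j = 0.
    have := congr1 p heq; rewrite !linearD !hpi !add0r !linear_sum !pZ => h.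
    under eq_bigr => j _ do rewrite scalerBl.
    by rewrite sumrB h subrr.
  have [u hu] := hr2 _ hp.
  have hi : i (e' - e) = i (\sum_k u k *: es k).
    rewrite linearB linear_sum.
    under [in RHS]eq_bigr => k _ do rewrite linearZZ hes.
    rewrite -swapZ; under eq_bigr => j _ do rewrite -hu scalerBl.
    rewrite sumrB; apply/eqP; rewrite subr_eq addrAC eq_sym subr_eq addrC heq //.
  have := hinj _ _ hi.
  under eq_bigr => k _ do rewrite -hy.
  rewrite -swapZ; under eq_bigr => j _ do rewrite -hu scalerBl.
  rewrite sumrB => /eqP; rewrite subr_eq => /eqP ->.
  by rewrite addrAC subrK addrC.
have rep mm : exists ce : ('I_n -> A) * E, mm = i ce.2 + \sum_j ce.1 j *: xs j.
  have [c hc] := hgen (p mm).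
  have [e he'] : exists e, i e = mm - \sum_j c j *: xs j.
    apply/hker; rewrite linearB linear_sum.
    by under eq_bigr => j _ do rewrite linearZZ hxs; rewrite -hc subrr.
  by exists (c, e); rewrite /= he' subrK.
pose s mm := (proj1_sig (cid (rep mm))).2 + \sum_j (proj1_sig (cid (rep mm))).1 j *: y j.
have hs mm c e : mm = i e + \sum_j c j *: xs j -> s mm = e + \sum_j c j *: y j.
  move=> hmm; apply: key; rewrite -hmm.
  exact: (esym (proj2_sig (cid (rep mm)))).
have lin_s : linear s.
  move=> k u v.
  have [[cu eu] hu] := rep u; have [[cv ev] hv] := rep v.
  rewrite (hs u cu eu hu) (hs v cv ev hv) (hs _ (fun j => k * cu j + cv j) (k *: eu + ev)).
    rewrite scalerDr scaler_sumr addrACA -big_split /=; congr (_ + _).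
    by apply: eq_bigr => j _; rewrite scalerA scalerDl.
  rewrite hu hv /= [i (_ + _)]linearD [i (_ *: _)]linearZZ scalerDr scaler_sumr addrACA -big_split /=; congr (_ + _).
  by apply: eq_bigr => j _; rewrite scalerA scalerDl.
pose sL : {linear M -> E} := HB.pack s (GRing.isLinear.Build _ _ _ _ s lin_s).
exists sL => e /=.
rewrite (hs _ (fun _ => 0) e); first by rewrite big1 ?addr0 // => j _; rewrite scale0r.
by rewrite big1 ?addr0 // => j _; rewrite scale0r.
Qed.
End Split.

Definition asb (P : Prop) : bool := if excluded_middle_informative P then true else false.
Lemma asbP (P : Prop) : reflect P (asb P).
Proof. by rewrite /asb; case: excluded_middle_informative => h; constructor. Qed.

Record submod (R : pzRingType) (V : lmodType R) := SubMod {
  smp :> V -> Prop;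
  sm0 : smp 0;
  smB : forall x y, smp x -> smp y -> smp (x - y);
  smZ : forall a x, smp x -> smp (a *: x) }.

Section QuotDefs.
Variables (R : pzRingType) (V : lmodType R) (S : submod V).

Lemma canon_ex (x : V) : exists y, asb (S (x - y)).
Proof. by exists x; apply/asbP; rewrite subrr; apply: sm0. Qed.

Definition canon (x : V) : V := xchoose (canon_ex x).

Lemma smN x : S x -> S (- x).
Proof. by move=> h; rewrite -sub0r; apply: smB => //; apply: sm0. Qed.
Lemma smD x y : S x -> S y -> S (x + y).
Proof. by move=> hx hy; rewrite -[y]opprK; apply: smB => //; apply: smN. Qed.

Lemma canonP x : S (x - canon x).
Proof. exact/asbP/(xchooseP (canon_ex x)). Qed.

Lemma canon_eq x y : S (x - y) -> canon x = canon y.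
Proof.
move=> h; apply: eq_xchoose => z; apply/asbP/asbP => hz.
  by have := smN (smB h hz); rewrite opprB opprB addrC addrA subrK.
by have := smD h hz; rewrite addrA subrK.
Qed.

Lemma canon_id x : canon (canon x) = canon x.
Proof. by apply: canon_eq; rewrite -opprB; apply: smN; apply: canonP. Qed.
End QuotDefs.

Definition quot (R : pzRingType) (V : lmodType R) (S : submod V) : Type :=
  {x : V | canon S x == x}.
HB.instance Definition _ (R : pzRingType) (V : lmodType R) (S : submod V) :=
  Choice.on (quot S).

Section QuotOps.
Variables (R : pzRingType) (V : lmodType R) (S : submod V).
Local Notation Q := (quot S).

Definition qpi (x : V) : Q := exist _ (canon S x) (introT eqP (canon_id S x)).
Definition qval (q : Q) : V := proj1_sig q.

Lemma qvalK (q : Q) : qpi (qval q) = q.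
Proof. case: q => x hx; apply: val_inj => /=; exact/eqP. Qed.

Lemma qpi_eq x y : qpi x = qpi y <-> S (x - y).
Proof.
split; last by move=> h; apply: val_inj => /=; apply: canon_eq.
move=> /(congr1 val) /= h.
have h1 := canonP S x; have h2 := canonP S y.
have := smB h1 h2; rewrite h opprB addrA subrK //.
Qed.

Lemma qpi_val x : S (qval (qpi x) - x).
Proof. by rewrite /= -opprB; apply: smN; apply: canonP. Qed.

Definition qzero : Q := qpi 0.
Definition qadd (p q : Q) : Q := qpi (qval p + qval q).
Definition qopp (q : Q) : Q := qpi (- qval q).
Definition qscale (a : R) (q : Q) : Q := qpi (a *: qval q).

Lemma qaddE x y : qadd (qpi x) (qpi y) = qpi (x + y).
Proof.
apply/qpi_eq; have := smD (qpi_val x) (qpi_val y).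
by rewrite addrACA opprD.
Qed.
Lemma qoppE x : qopp (qpi x) = qpi (- x).
Proof. by apply/qpi_eq; have := smN (qpi_val x); rewrite opprB opprK addrC. Qed.
Lemma qscaleE a x : qscale a (qpi x) = qpi (a *: x).
Proof. by apply/qpi_eq; have := smZ a (qpi_val x); rewrite scalerBr. Qed.

Lemma qind (P : Q -> Prop) : (forall x, P (qpi x)) -> forall q, P q.
Proof. by move=> h q; rewrite -(qvalK q). Qed.

Lemma qaddA : associative qadd.
Proof. by elim/qind=> x; elim/qind=> y; elim/qind=> z; rewrite !qaddE addrA. Qed.
Lemma qaddC : commutative qadd.
Proof. by elim/qind=> x; elim/qind=> y; rewrite !qaddE addrC. Qed.
Lemma qadd0 : left_id qzero qadd.
Proof. by elim/qind=> x; rewrite qaddE add0r. Qed.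
Lemma qaddN : left_inverse qzero qopp qadd.
Proof. by elim/qind=> x; rewrite qoppE qaddE addNr. Qed.

HB.instance Definition _ := GRing.isZmodule.Build Q qaddA qaddC qadd0 qaddN.

Lemma qpiD x y : (qpi x + qpi y : Q) = qpi (x + y).
Proof. exact: qaddE. Qed.

Lemma qscaleA a b v : qscale a (qscale b v) = qscale (a * b) v.
Proof. by elim/qind: v => x; rewrite !qscaleE scalerA. Qed.
Lemma qscale1 : left_id 1 qscale.
Proof. by elim/qind=> x; rewrite qscaleE scale1r. Qed.
Lemma qscaleDr : right_distributive qscale +%R.
Proof. by move=> a; elim/qind=> x; elim/qind=> y; rewrite qpiD !qscaleE qpiD scalerDr. Qed.
Lemma qscaleDl v : {morph qscale^~ v: a b / a + b}.
Proof. by elim/qind: v => x a b; rewrite !qscaleE qpiD scalerDl. Qed.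

HB.instance Definition _ := GRing.Zmodule_isLmodule.Build R Q qscaleA qscale1 qscaleDr qscaleDl.

Lemma qpiZ a x : (a *: qpi x : Q) = qpi (a *: x).
Proof. exact: qscaleE. Qed.

Lemma qpi_lin : linear qpi.
Proof. by move=> a x y; rewrite -qpiD; congr (_ + _); rewrite -qscaleE. Qed.

Lemma qpi0 x : qpi x = 0 <-> S x.
Proof. by have := qpi_eq x 0; rewrite subr0. Qed.
End QuotOps.

Section FPdiv.
Variables (A : comNzRingType) (E : lmodType A).

Lemma fpinj_div : FP_injective E -> forall (c : A) (e : E),
  (forall z, z * c = 0 -> z *: e = 0) -> exists e', e = c *: e'.
Proof.
move=> hfp c e hann.
have SF0 : (fun x : A^o => exists y, x = y * c) 0 by exists 0; rewrite mul0r.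
have SFB : forall x y : A^o, (exists y, x = y * c) -> (exists y', y = y' * c) ->
    exists z, x - y = z * c.
  by move=> x y [a ->] [b ->]; exists (a - b); rewrite mulrBl.
have SFZ : forall (a : A) (x : A^o), (exists y, x = y * c) -> exists z, a *: x = z * c.
  by move=> a x [b ->]; exists (a * b); rewrite -mulrA.
pose SF := SubMod SF0 SFB SFZ.
pose F := quot SF.
pose PM (u : (A^o * E)%type) := exists y, u.1 = y * c /\ u.2 = - (y *: e).
have SM0 : PM 0 by exists 0; rewrite mul0r scale0r oppr0.
have SMB : forall u v, PM u -> PM v -> PM (u - v).
  move=> [u1 u2] [v1 v2] [a /= [-> ->]] [b /= [-> ->]]; exists (a - b); split.
    by rewrite /= mulrBl.
  by rewrite /= scalerBl opprB opprK addrC.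
have SMZ : forall (a : A) u, PM u -> PM (a *: u).
  move=> a [u1 u2] [b /= [-> ->]]; exists (a * b); split.
    by rewrite /= -mulrA.
  by rewrite /= scalerN scalerA.
pose SM := SubMod SM0 SMB SMZ.
pose M := quot SM.
have p0E w : qpi SF (qval (qpi SM w)).1 = qpi SF w.1.
  have [z [h1 _]] := qpi_val SM w; apply/qpi_eq; exact: (ex_intro _ z h1).
pose p0 (m : M) : F := qpi SF (qval m).1.
have lin_p : linear p0.
  move=> k; elim/qind=> x; elim/qind=> y.
  rewrite -qpi_lin /p0 !p0E /=; exact: qpi_lin.
pose pL : {linear M -> F} := HB.pack p0 (GRing.isLinear.Build _ _ _ _ p0 lin_p).
pose i0 (f : E) : M := qpi SM (0, f).
have lin_i : linear i0.
  move=> k f f'; rewrite /i0 -qpi_lin; congr qpi.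
  apply: injective_projections.
    by change ((0 : A) = k *: (0 : A^o) + 0); rewrite scaler0 add0r.
  by [].
pose iL : {linear E -> M} := HB.pack i0 (GRing.isLinear.Build _ _ _ _ i0 lin_i).
have hfpF : finitely_presented F.
  exists 1%N, (fun _ => qpi SF 1); split.
    elim/qind=> x; exists (fun _ => x); rewrite big_ord1 qpiZ; congr qpi.
    exact: (esym (mulr1 x)).
  exists 1%N, (fun _ _ => c); split.
    move=> j; rewrite big_ord1 qpiZ; apply/qpi0; exists 1.
    by rewrite mul1r; exact: (mulr1 c).
  move=> k; rewrite big_ord1 qpiZ => /qpi0 [y hy].
  exists (fun _ => y) => i; rewrite (ord1 i) big_ord1 -hy.
  exact: (esym (mulr1 _)).
have hinj : injective iL.
  move=> f f' /qpi_eq [y /= [h1 h2]].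
  have hy : y * c = 0 by rewrite -h1 subrr.
  by move: h2; rewrite (hann _ hy) oppr0 => /eqP; rewrite subr_eq0 => /eqP.
have hsurj : forall v : F, exists m : M, pL m = v.
  by elim/qind=> x; exists (qpi SM (x, 0)); rewrite /= /p0 p0E.
have hker : forall m : M, pL m = 0 <-> exists f, iL f = m.
  elim/qind=> [[x f]]; rewrite /= /p0 p0E /=; split.
    move=> /qpi0 [y hy]; exists (f + y *: e); rewrite /i0; apply/qpi_eq.
    exists (- y); split; first by rewrite /= hy sub0r mulNr.
    by rewrite /= scaleNr opprK addrC addrA addNr add0r.
  move=> [f' hf']; move: hf'; rewrite /i0 => /qpi_eq [y /= [h1 h2]].
  by apply/qpi0; exists (- y); rewrite mulNr -h1 sub0r opprK.
have [r hr] := hfp F hfpF M iL pL hinj hsurj hker.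
exists (r (qpi SM (1, 0))).
have hq : (c *: qpi SM (1, 0) : M) = iL e.
  rewrite qpiZ /= /i0; apply/qpi_eq.
  exists 1; split.
    by change (c * 1 - 0 = 1 * c); rewrite mul1r subr0 mulr1.
  by change (c *: 0 - e = - (1 *: e)); rewrite scaler0 sub0r scale1r.
by rewrite -linearZZ hq hr.
Qed.
End FPdiv.

Lemma lc3 (R : comNzRingType) (x y k1 l1 r1 k2 l2 r2 k3 l3 r3 : R) :
  x - y = k1 * (l1 - r1) + k2 * (l2 - r2) + k3 * (l3 - r3) ->
  l1 = r1 -> l2 = r2 -> l3 = r3 -> x = y.
Proof.
by move=> h h1 h2 h3; apply/eqP; rewrite -subr_eq0 h h1 h2 h3 !subrr !mulr0 !addr0.
Qed.
Lemma lc5 (R : comNzRingType) (x y k1 l1 r1 k2 l2 r2 k3 l3 r3 k4 l4 r4 k5 l5 r5 : R) :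
  x - y = k1 * (l1 - r1) + k2 * (l2 - r2) + k3 * (l3 - r3) + k4 * (l4 - r4)
          + k5 * (l5 - r5) ->
  l1 = r1 -> l2 = r2 -> l3 = r3 -> l4 = r4 -> l5 = r5 -> x = y.
Proof.
by move=> h h1 h2 h3 h4 h5; apply/eqP; rewrite -subr_eq0 h h1 h2 h3 h4 h5 !subrr !mulr0 !addr0.
Qed.

Section Herm.
Variables (A : comNzRingType) (E : lmodType A).
Local Notation R := (triv_ext E).

Definition emb (a : A) : R := (a, 0).
Definition tv (v : E) : R := (0, v).

Lemma pairE (a : A) (v : E) : ((a, v) : R) = emb a + tv v.
Proof. by rewrite teD /= addr0 add0r. Qed.
Lemma embD a b : emb (a + b) = emb a + emb b.
Proof. by rewrite teD /= addr0. Qed.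
Lemma embM a b : emb (a * b) = emb a * emb b.
Proof. by rewrite teM /= !scaler0 addr0. Qed.
Lemma emb1 : emb 1 = 1. Proof. by []. Qed.
Lemma emb0 : emb 0 = 0. Proof. by []. Qed.
Lemma embN a : emb (- a) = - emb a.
Proof. by apply/eqP; rewrite -subr_eq0 opprK -embD addNr. Qed.
Lemma embB a b : emb (a - b) = emb a - emb b.
Proof. by rewrite embD embN. Qed.
Lemma tvZ a v : tv (a *: v) = emb a * tv v.
Proof. by rewrite teM /= mulr0 scale0r addr0. Qed.
Lemma tvD v w : tv (v + w) = tv v + tv w.
Proof. by rewrite teD /= addr0. Qed.
Lemma tvM v w : tv v * tv w = 0.
Proof. by rewrite teM /= mulr0 !scale0r addr0. Qed.
Lemma tv_inj : injective tv.
Proof. by move=> v w []. Qed.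
Lemma emb_inj : injective emb.
Proof. by move=> v w []. Qed.

Lemma core (c : A) (e f : E) (eps s t U0 V0 : A) (l g : E) :
  eps * eps = eps -> c * (1 - eps) = 0 -> eps *: f = c *: l ->
  (1 - eps) *: e = s *: g -> (1 - eps) *: f = t *: g -> U0 * s + V0 * t = 1 ->
  exists d p q U V : R, [/\ ((c, e) : R) = d * p, ((0, f) : R) = d * q &
                         U * p + V * q = 1].
Proof.
move=> H1 H2 H3 H4 H5 H6.
move/(congr1 emb): H1; rewrite embM => {}H1.
move/(congr1 emb): H2; rewrite embM embB emb1 emb0 => {}H2.
move/(congr1 tv): H3; rewrite !tvZ => {}H3.
move/(congr1 tv): H4; rewrite !tvZ embB emb1 => {}H4.
move/(congr1 tv): H5; rewrite !tvZ embB emb1 => {}H5.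
move/(congr1 emb): H6; rewrite embD !embM emb1 => {}H6.
have T1 := tvM e l.
set Ee := emb eps in H1 H2 H3 H4 H5 *.
exists (emb c + Ee * tv e + (1 - Ee) * tv g), (Ee + (1 - Ee) * emb s),
  ((1 - Ee) * emb t + Ee * tv l), (Ee + (1 - Ee) * emb U0), ((1 - Ee) * emb V0).
split.
- rewrite pairE; symmetry.
  apply: (lc3 (k1 := (3 - Ee - emb s) * tv e - tv g) (k2 := emb s - 1)
    (k3 := - (1 - Ee) ^+ 2) _ H1 H2 H4); ring.
- rewrite pairE emb0 add0r; symmetry.
  apply: (lc5 (k1 := - emb t * tv e + (2 - Ee) * tv f - tv g * tv l)
    (k2 := emb t - tv l) (k3 := -1) (k4 := - (1 - Ee) ^+ 2) (k5 := Ee ^+ 2)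
    _ H1 H2 H3 H5 T1); ring.
- apply: (lc2 (k1 := 2 - emb s - emb U0 - emb V0 * tv l) (k2 := (1 - Ee) ^+ 2)
    _ H1 H6); ring.
Qed.
End Herm.

Section Final.
Variables (A : comNzRingType) (E : lmodType A).
Local Notation R := (triv_ext E).

Lemma case3_herm : coherent A -> reduced A -> bezout A -> FP_injective E ->
  fg_submodules_cyclic E -> hermite R.
Proof.
move=> hco hred hb hfp hcyc [a e] [b f].
have [dl [a0 [b0 [u [v [ha hb0 huv]]]]]] := herm_A hco hb hred a b.
pose e'' := u *: e + v *: f; pose f'' := - (b0 *: e) + a0 *: f.
have [eps [he1 he2 he3]] := idem_ann hco hb hred dl.
have [l hl] : exists l, eps *: f'' = dl *: l.
  apply: (fpinj_div hfp) => z hz; rewrite scalerA mulrC he3 ?scale0r //.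
pose e2 := (1 - eps) *: e''; pose f2 := (1 - eps) *: f''.
have [g0 hg0] := hcyc 2%N (fam2 e2 f2).
have [s hs] : exists s, e2 = s *: g0.
  by apply/hg0; exists (fam2 1 0); rewrite sum2 /fam2 /= scale1r scale0r addr0.
have [t ht] : exists t, f2 = t *: g0.
  by apply/hg0; exists (fam2 0 1); rewrite sum2 /fam2 /= scale1r scale0r add0r.
have [cc hcc] : exists cc : 'I_2 -> A, g0 = \sum_i cc i *: fam2 e2 f2 i.
  by apply/hg0; exists 1; rewrite scale1r.
rewrite sum2 /fam2 /= in hcc.
pose w := 1 - cc ord0 * s - cc o1 * t.
have hw : w *: g0 = 0.
  rewrite /w !scalerBl scale1r -!scalerA -hs -ht {1}hcc.
  by rewrite addrAC addrK subrr.
have [x [y [U0 [V0 hUV0]]]] : exists x y U V : A, U * (s + x * w) + V * (t + y * w) = 1.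
  by apply: (sr2 hco hb hred (al := cc ord0) (be := cc o1)); rewrite /w; ring.
have hs' : e2 = (s + x * w) *: g0 by rewrite scalerDl -scalerA hw scaler0 addr0.
have ht' : f2 = (t + y * w) *: g0 by rewrite scalerDl -scalerA hw scaler0 addr0.
have [d [p [q [U [V [hp hq hUV]]]]]] :=
  core he1 he2 hl hs' ht' hUV0.
have hu : emb E u * emb E a0 + emb E v * emb E b0 = 1.
  by rewrite -!embM -embD huv.
have hx : ((dl, e'') : R) = emb E u * (a, e) + emb E v * (b, f).
  rewrite !teM teD /= !scaler0 !addr0; congr pair.
  rewrite ha hb0; apply: (lc1 (k := dl) _ (esym huv)); ring.
have hy : ((0, f'') : R) = - emb E b0 * (a, e) + emb E a0 * (b, f).
  rewrite teD !teM /= !scaler0 !addr0; congr pair.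
    rewrite ha hb0; ring.
  by rewrite oppr0 scaler0 addr0 scaleNr.
exists d, (emb E a0 * p - emb E v * q), (emb E b0 * p + emb E u * q); split.
- have -> : d * (emb E a0 * p - emb E v * q) = emb E a0 * (d * p) - emb E v * (d * q) by ring.
  rewrite -hp -hq hx hy.
  apply: (lc1 (k := - ((a, e) : R)) _ hu); ring.
- have -> : d * (emb E b0 * p + emb E u * q) = emb E b0 * (d * p) + emb E u * (d * q) by ring.
  rewrite -hp -hq hx hy.
  apply: (lc1 (k := - ((b, f) : R)) _ hu); ring.
- exists (U * emb E u - V * emb E b0), (U * emb E v + V * emb E a0).
  apply: (lc2 (k1 := U * p + V * q) (k2 := 1) _ hu hUV); ring.
Qed.
End Final.


Theorem corollary3p3 (A : comNzRingType) (E : lmodType A) :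
  coherent A -> reduced A -> (exists e : E, e != 0) ->
  [<-> hermite (triv_ext E);
       bezout (triv_ext E);
       [/\ bezout A, FP_injective E & fg_submodules_cyclic E]].
Proof.
move=> hco hred _; tfae.
- exact: herm_bez.
- move=> hb; have hbA := bezR_bezA hb; split => //.
    apply: solv_fpinj; apply: (solve_sys hco hbA); exact: bezR_div.
  exact: bezR_cyc.
- by case=> hbA hfp hcyc; apply: case3_herm.
Qed.
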